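(* Let $d,m,p,n\ge 1$ and let $\{g_{ij}:1\le i\le m,1\le j\le p\}$ be fixed functions $\mathbb{R}^d\to\mathbb{R}$. Fix $\mathbf{X}=[\mathbf{x}_1,\dots,\mathbf{x}_n]^\top\in\mathbb{R}^{n\times d}$. Let $0<v\le 2$ and $r,s>0$ with $1/r+1/s=1$, and let $b_{m,p,n},c_{m,p,n}>0$. Let $\mathcal{F}$ be the class of maps $\boldsymbol{\Psi}=(\psi_1,\dots,\psi_m):\mathbb{R}^d\to\mathbb{R}^m$ of the form $\psi_i(\mathbf{x})=\sum_{j=1}^p\beta_{ij}g_{ij}(\mathbf{x})$ with coefficient matrix $\mathbf{B}=(\beta_{ij})\in\mathbb{R}^{m\times p}$ satisfying $\|\mathbf{B}\|_r=(\sum_{i,j}|\beta_{ij}|^r)^{1/r}\le b_{m,p,n}$, and assume $\|\mathbf{G}(\mathbf{X})\|_{v,s}\le c_{m,p,n}$, where $\mathbf{G}(\mathbf{X})=(g_{ij}(\mathbf{x}_k))\in\mathbb{R}^{m\times p\times n}$ and $\|\mathbf{G}(\mathbf{X})\|_{v,s}=\big\{\sum_{i=1}^m\sum_{j=1}^p\big(\sum_{k=1}^n|g_{ij}(\mathbf{x}_k)|^v\big)^{s/v}\big\}^{1/s}$. Then for every $\epsilon>0$, $$\log\mathcal{N}\big(\{\boldsymbol{\Psi}(\mathbf{X})\in\mathbb{R}^{n\times m}:\boldsymbol{\Psi}\in\mathcal{F}\},\epsilon,\|\cdot\|_2\big)\le \frac{b_{m,p,n}^2c_{m,p,n}^2}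{\epsilon^2}\log(2mp).$$
   Context: $\boldsymbol{\Psi}(\mathbf{X})=[\boldsymbol{\Psi}(\mathbf{x}_1),\dots,\boldsymbol{\Psi}(\mathbf{x}_n)]^\top$. $\|A\|_2$ denotes the Frobenius norm of a matrix $A$. Proper covering number: $\mathcal{N}(\mathcal{U},\epsilon,\|\cdot\|)$ is the smallest cardinality of a subset $\mathcal{V}\subseteq\mathcal{U}$ such that every $u\in\mathcal{U}$ has some $v\in\mathcal{V}$ with $\|u-v\|\le\epsilon$. *)

(* Defs.v *)
From mathcomp Require Import all_boot all_order all_algebra.
From mathcomp Require Import all_classical all_reals all_analysis.
Set Implicit Arguments. Unset Strict Implicit. Unset Printing Implicit Defensive.
Import Order.TTheory GRing.Theory Num.Theory.
Local Open Scope ring_scope.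
Local Open Scope classical_set_scope.

Definition frob {R : realType} {n m : nat} (A : 'M[R]_(n, m)) : R :=
  Num.sqrt (\sum_(k < n) \sum_(i < m) A k i ^+ 2).

Definition entry_rnorm {R : realType} {m p : nat} (r : R) (B : 'M[R]_(m, p)) : R :=
  (\sum_(i < m) \sum_(j < p) `|B i j| `^ r) `^ r^-1.

Definition G_norm {R : realType} {d m p n : nat} (v s : R)
  (g : 'I_m -> 'I_p -> 'rV[R]_d -> R) (X : 'M[R]_(n, d)) : R :=
  (\sum_(i < m) \sum_(j < p)
      (\sum_(k < n) `|g i j (row k X)| `^ v) `^ (s / v)) `^ s^-1.

Definition PsiX {R : realType} {d m p n : nat}
  (g : 'I_m -> 'I_p -> 'rV[R]_d -> R) (B : 'M[R]_(m, p)) (X : 'M[R]_(n, d))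
  : 'M[R]_(n, m) :=
  \matrix_(k < n, i < m) \sum_(j < p) B i j * g i j (row k X).

Definition is_proper_cover {R : realType} {n m : nat}
  (U : set 'M[R]_(n, m)) (eps : R) (V : seq 'M[R]_(n, m)) : Prop :=
  uniq V /\ (forall v, v \in V -> U v) /\
  (forall u, U u -> exists2 v, v \in V & frob (u - v) <= eps).

Definition is_covering_number {R : realType} {n m : nat}
  (U : set 'M[R]_(n, m)) (eps : R) (N : nat) : Prop :=
  (exists V, is_proper_cover U eps V /\ size V = N) /\
  (forall V, is_proper_cover U eps V -> (N <= size V)%N).

(* Main.v *)
Require Import Defs.
From mathcomp Require Import all_boot all_order all_algebra.
From mathcomp Require Import all_classical all_reals all_analysis.
From mathcomp Require Import ring lra.
Import Order.TTheory GRing.Theory Num.Theory.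
Local Open Scope ring_scope.
Local Open Scope classical_set_scope.
Set Implicit Arguments. Unset Strict Implicit. Unset Printing Implicit Defensive.

Section Greedy.
Variable R : realType.
Variables n m : nat.

Definition fs (A : 'M[R]_(n, m)) : R := \sum_(k < n) \sum_(i < m) A k i ^+ 2.

Lemma fs_ge0 A : 0 <= fs A.
Proof. by apply: sumr_ge0 => k _; apply: sumr_ge0 => i _; exact: sqr_ge0. Qed.

Lemma avg_entry (S : finType) (lam : S -> R) (e : R) (w : S -> R) :
  \sum_s lam s = 1 -> \sum_s lam s * w s = 0 ->
  \sum_s lam s * (e + w s) ^+ 2 = e ^+ 2 + \sum_s lam s * w s ^+ 2.
Proof.
move=> H1 H0.
have -> : \sum_s lam s * (e + w s) ^+ 2 =
   \sum_s (lam s * e ^+ 2 + ((e *+ 2) * (lam s * w s) + lam s * w s ^+ 2)).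
  by apply: eq_bigr => s _; rewrite sqrrD; ring.
rewrite big_split big_split /= -mulr_suml H1 mul1r -mulr_sumr H0 mulr0 add0r.
by [].
Qed.

Lemma fs_avg (S : finType) (lam : S -> R) (E : 'M[R]_(n, m)) (W : S -> 'M[R]_(n, m)) :
  \sum_s lam s = 1 -> \sum_s lam s *: W s = 0 ->
  \sum_s lam s * fs (E + W s) = fs E + \sum_s lam s * fs (W s).
Proof.
move=> H1 H0; rewrite /fs.
have eL : forall G : S -> 'I_n -> 'I_m -> R,
  \sum_s lam s * (\sum_(k < n) \sum_(i < m) G s k i) =
  \sum_(k < n) \sum_(i < m) \sum_s lam s * G s k i.
  move=> G; rewrite (eq_bigr (fun s => \sum_(k < n) \sum_(i < m) lam s * G s k i)).
    by rewrite exchange_big; apply: eq_bigr => k _; rewrite exchange_big.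
  by move=> s _; rewrite mulr_sumr; apply: eq_bigr => k _; rewrite mulr_sumr.
rewrite eL eL -big_split; apply: eq_bigr => k _; rewrite -big_split.
apply: eq_bigr => i _.
under eq_bigr do rewrite mxE.
apply: avg_entry => //.
have := congr1 (fun M : 'M[R]_(n, m) => M k i) H0.
by rewrite summxE mxE /=; under eq_bigr do rewrite mxE.
Qed.

Lemma avg_exists (S : finType) (lam : S -> R) (F : S -> R) (C : R) :
  (forall s, 0 <= lam s) -> \sum_s lam s = 1 -> \sum_s lam s * F s <= C ->
  exists s, F s <= C.
Proof.
move=> hl H1 HC.
have [//|/forallNP H] := pselect (exists s, F s <= C).
have H' : forall s, C < F s by move=> s; rewrite ltNge; apply/negP; exact: H.
have [s0 ls0] : exists s, lam s != 0.
  have [//|/forallNP Hn] := pselect (exists s, lam s != 0).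
  exfalso; suff : \sum_s lam s = 0 by rewrite H1 => /eqP; rewrite oner_eq0.
  apply: big1 => s _; by apply/eqP; apply/negPn/negP; exact: Hn s.
have : 0 < \sum_s lam s * (F s - C).
  rewrite (bigD1 s0) //=; apply: ltr_pwDl.
    apply: mulr_gt0; first by rewrite lt_def ls0 hl.
    by rewrite subr_gt0.
  apply: sumr_ge0 => s _; apply: mulr_ge0 => //; rewrite subr_ge0; exact: ltW.
have -> : \sum_s lam s * (F s - C) = \sum_s lam s * F s - C.
  under eq_bigr do rewrite mulrBr.
  by rewrite sumrB -mulr_suml H1 mul1r.
by rewrite subr_gt0 ltNge HC.
Qed.

Lemma greedy (S : finType) (V : S -> 'M[R]_(n, m)) (lam : S -> R) (x : 'M[R]_(n, m)) :
  (forall s, 0 <= lam s) -> \sum_s lam s = 1 -> \sum_s lam s *: V s = x ->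
  forall k, exists sq : seq S, size sq = k /\
    fs (k.+1%:R *: x - \sum_(s <- sq) V s) <=
    fs x + k%:R * \sum_s lam s * fs (x - V s).
Proof.
move=> hl H1 Hx; elim=> [|k [sq [hsz hb]]].
  by exists [::]; rewrite big_nil subr0 scale1r mul0r addr0.
set E := k.+1%:R *: x - \sum_(s <- sq) V s.
have H0 : \sum_s lam s *: (x - V s) = 0.
  under eq_bigr do rewrite scalerBr.
  by rewrite sumrB -scaler_suml H1 scale1r Hx subrr.
have := fs_avg E H1 H0 => Havg.
have [s hs] : exists s, fs (E + (x - V s)) <= fs E + \sum_s lam s * fs (x - V s).
  by apply: (avg_exists hl H1); rewrite Havg.
exists (s :: sq); split; first by rewrite /= hsz.
rewrite big_cons.
have -> : k.+2%:R *: x - (V s + \sum_(j <- sq) V j) = E + (x - V s).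
  by rewrite /E (mulrSr _ k.+1) scalerDl scale1r opprD [- V s + _]addrC addrACA.
apply: (le_trans hs).
rewrite (mulrSr _ k) mulrDl mul1r addrA lerD2r.
exact: hb.
Qed.

End Greedy.

Section Proj.
Variable R : realType.
Variables n m : nat.
Local Notation fs := (@fs R n m).

Definition dotm (A B : 'M[R]_(n, m)) : R := \sum_(k < n) \sum_(i < m) A k i * B k i.

Lemma fsD A B : fs (A + B) = fs A + 2 * dotm A B + fs B.
Proof.
rewrite /fs /dotm mulr_sumr -!big_split; apply: eq_bigr => k _.
rewrite mulr_sumr -!big_split; apply: eq_bigr => i _.
rewrite mxE /=; ring.
Qed.

Lemma fsN A : fs (- A) = fs A.
Proof. by rewrite /fs; apply: eq_bigr => k _; apply: eq_bigr => i _; rewrite mxE sqrrN. Qed.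

Lemma fsZ (t : R) A : fs (t *: A) = t ^+ 2 * fs A.
Proof.
rewrite /fs mulr_sumr; apply: eq_bigr => k _; rewrite mulr_sumr; apply: eq_bigr => i _.
by rewrite mxE exprMn.
Qed.

Lemma dotmN A B : dotm A (- B) = - dotm A B.
Proof.
rewrite /dotm -sumrN; apply: eq_bigr => k _; rewrite -sumrN; apply: eq_bigr => i _.
by rewrite mxE mulrN.
Qed.

Lemma dotmZ A (t : R) B : dotm A (t *: B) = t * dotm A B.
Proof.
rewrite /dotm mulr_sumr; apply: eq_bigr => k _; rewrite mulr_sumr; apply: eq_bigr => i _.
by rewrite mxE mulrCA.
Qed.

Lemma dotmC A B : dotm A B = dotm B A.
Proof. by rewrite /dotm; apply: eq_bigr => k _; apply: eq_bigr => i _; rewrite mulrC. Qed.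

Lemma fsB_le A B : fs (A - B) <= 2 * fs A + 2 * fs B.
Proof.
have h1 := fsD A (- B); have h2 := fsD A B.
have := fs_ge0 (A + B); rewrite h1 h2 fsN dotmN => h; lra.
Qed.

Lemma proj_exists (U : set 'M[R]_(n, m)) (u0 : 'M[R]_(n, m)) (R2 eps2 eta : R)
  (c : 'M[R]_(n, m)) :
  U u0 -> (forall u, U u -> fs u <= R2) ->
  (forall x y (t : R), U x -> U y -> 0 <= t -> t <= 1 -> U (y + t *: (x - y))) ->
  0 < eta ->
  exists p, U p /\ forall x, U x -> fs (x - c) <= eps2 - eta -> fs (x - p) <= eps2.
Proof.
move=> Uu0 hR2 hconv heta.
have R20 : 0 <= R2 by apply: le_trans (fs_ge0 u0) (hR2 _ Uu0).
set E := [set fs (c - u) | u in U].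
have hlb : has_lbound E by exists 0 => _ [u _ <-]; exact: fs_ge0.
have hne : has_inf E by split => //; exists (fs (c - u0)), u0.
set th := eta / (8 * R2 + eta).
have den : 0 < 8 * R2 + eta by lra.
have th0 : 0 < th by rewrite divr_gt0.
have thd : th * (8 * R2 + eta) = eta by rewrite /th mulfVK // gt_eqF.
have th1 : th <= 1.
  rewrite /th ler_pdivrMr // mul1r; lra.
set de := th * eta / 2.
have de0 : 0 < de by rewrite /de divr_gt0 // mulr_gt0.
have [e [p Up <-] hp] := inf_adherent de0 hne.
exists p; split => // x Ux hx.
set q := p + th *: (x - p).
have Uq : U q by apply: hconv => //; exact: ltW.
have hq : inf E <= fs (c - q) by apply: ge_inf => //; exists q.
set A := c - p; set B := x - p.
have eq1 : c - q = A + (- th) *: B by rewrite /q /A /B scaleNr opprD addrA.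
have eq2 : x - c = B + - A by rewrite /A /B opprB addrA subrK.
have e1 : fs (c - q) = fs A - 2 * th * dotm A B + th ^+ 2 * fs B.
  by rewrite eq1 fsD fsZ dotmZ sqrrN; ring.
have e2 : fs (x - c) = fs B - 2 * dotm A B + fs A.
  by rewrite eq2 fsD fsN dotmN dotmC; ring.
have hA0 := fs_ge0 A.
have hB4 : fs B <= 4 * R2.
  have := fsB_le x p; have := hR2 _ Ux; have := hR2 _ Up; rewrite -/B; lra.
have i1 : th * (2 * dotm A B) < th * (th * fs B + eta / 2).
  have : fs A - de < fs (c - q) by lra.
  rewrite e1 /de; lra.
have i2 : 2 * dotm A B < th * fs B + eta / 2 by rewrite ltr_pM2l in i1.
have i3 : th * fs B <= th * (4 * R2) by rewrite ler_pM2l.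
have i4 : 0 <= th * eta by rewrite mulr_ge0 // ltW.
lra.
Qed.

End Proj.

Section PowLemmas.
Variable R : realType.

Lemma powR_invK (y t : R) : 0 <= y -> 0 < t -> (y `^ t^-1) `^ t = y.
Proof.
move=> y0 t0; rewrite -powRrM mulVf ?gt_eqF // powRr1 //.
Qed.

Lemma powR_Kinv (y t : R) : 0 <= y -> 0 < t -> (y `^ t) `^ t^-1 = y.
Proof.
move=> y0 t0; rewrite -powRrM mulfV ?gt_eqF // powRr1 //.
Qed.

Lemma pow_inv_le (y t b : R) : 0 <= y -> 0 < t -> 0 <= b ->
  y `^ t^-1 <= b -> y <= b `^ t.
Proof.
move=> y0 t0 b0 h; rewrite -(powR_invK y0 t0).
by apply: ge0_ler_powR => //; [exact: ltW | rewrite nnegrE powR_ge0].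
Qed.

Lemma le_pow_inv (y t b : R) : 0 <= y -> 0 < t -> 0 <= b ->
  y <= b `^ t -> y `^ t^-1 <= b.
Proof.
move=> y0 t0 b0 h; rewrite -(powR_Kinv b0 t0).
apply: ge0_ler_powR => //; first by rewrite invr_ge0 ltW.
by rewrite nnegrE powR_ge0.
Qed.

Lemma powR_conv (x y t r : R) : 1 <= r -> 0 <= x -> 0 <= y -> 0 <= t -> t <= 1 ->
  (t * x + (1 - t) * y) `^ r <= t * x `^ r + (1 - t) * y `^ r.
Proof.
move=> r1 x0 y0 t0 t1.
by apply: (convex_powR r1 (Itv01 t0 t1)) => //=;
  rewrite ?inE/= ?in_itv/= ?andbT.
Qed.

Lemma powR_divr (a b r : R) : 0 <= a -> 0 < b -> (a / b) `^ r = a `^ r / b `^ r.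
Proof.
move=> a0 b0.
have hb : b `^ r * (b^-1) `^ r = 1.
  by rewrite -powRM ?invr_ge0 ?ltW // mulfV ?gt_eqF // powR1.
have hb0 : b `^ r != 0 by rewrite gt_eqF // powR_gt0.
rewrite powRM //; last by rewrite invr_ge0 ltW.
congr (_ * _).
by apply: (mulfI hb0); rewrite hb mulfV.
Qed.

Lemma holder_lite (I J : finType) (al be : I -> J -> R) (r s b c : R) :
  0 < r -> 0 < s -> r^-1 + s^-1 = 1 -> 0 < b -> 0 < c ->
  (forall i j, 0 <= al i j) -> (forall i j, 0 <= be i j) ->
  \sum_i \sum_j al i j `^ r <= b `^ r ->
  \sum_i \sum_j be i j `^ s <= c `^ s ->
  \sum_i \sum_j al i j * be i j <= b * c.
Proof.
move=> r0 s0 rs b0 c0 ha hb hA hB.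
have br : 0 < b `^ r by rewrite powR_gt0.
have cs : 0 < c `^ s by rewrite powR_gt0.
have key : \sum_i \sum_j (al i j / b) * (be i j / c) <= 1.
  apply: (@le_trans _ _ (\sum_i \sum_j
       ((al i j `^ r / b `^ r) / r + (be i j `^ s / c `^ s) / s))).
    apply: ler_sum => i _; apply: ler_sum => j _.
    rewrite -!powR_divr //; apply: conjugate_powR => //.
      by rewrite divr_ge0 // ltW.
    by rewrite divr_ge0 // ltW.
  under eq_bigr do rewrite big_split /=.
  rewrite big_split /=.
  have e1 : \sum_i \sum_j (al i j `^ r / b `^ r / r) =
     (\sum_i \sum_j al i j `^ r) / b `^ r / r.
    by rewrite !mulr_suml; apply: eq_bigr => i _; rewrite !mulr_suml.
  have e2 : \sum_i \sum_j (be i j `^ s / c `^ s / s) =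
     (\sum_i \sum_j be i j `^ s) / c `^ s / s.
    by rewrite !mulr_suml; apply: eq_bigr => i _; rewrite !mulr_suml.
  rewrite e1 e2 -rs.
  apply: lerD; rewrite -[X in _ <= X]mul1r; (apply: ler_wpM2r;
    [by rewrite invr_ge0 ltW | by rewrite ler_pdivrMr // mul1r]).
have -> : \sum_i \sum_j al i j * be i j =
   (b * c) * \sum_i \sum_j (al i j / b) * (be i j / c).
  rewrite mulr_sumr; apply: eq_bigr => i _; rewrite mulr_sumr; apply: eq_bigr => j _.
  by field; rewrite ?gt_eqF.
by rewrite -{2}(mulr1 (b * c)) ler_wpM2l // mulr_ge0 // ltW.
Qed.

Lemma l2_le_lv (n : nat) (F : 'I_n -> R) (v : R) : 0 < v -> v <= 2 ->
  \sum_k F k ^+ 2 <= ((\sum_k `|F k| `^ v) `^ v^-1) ^+ 2.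
Proof.
move=> v0 v2.
set S := \sum_k `|F k| `^ v.
have S0 : 0 <= S by apply: sumr_ge0 => k _; exact: powR_ge0.
have [SE|Sn0] := eqVneq S 0.
  have Fk : forall k, F k = 0.
    move=> k; have := @psumr_eq0P _ _ predT (fun k => `|F k| `^ v)
       (fun k _ => powR_ge0 _ _) SE k isT.
    by move/powR_eq0_eq0/normr0_eq0.
  rewrite big1 ?sqr_ge0 // => k _; by rewrite Fk expr0n.
have Spos : 0 < S by rewrite lt_def Sn0 S0.
set N := S `^ v^-1.
have N0 : 0 < N by rewrite powR_gt0.
have NvS : N `^ v = S by rewrite /N powR_invK.
have FN : forall k, `|F k| <= N.
  move=> k; rewrite leNgt; apply/negP => H.
  have := gt0_ltr_powR v0 (ltW N0) (normr_ge0 (F k)) H.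
  rewrite NvS => H2.
  have : `|F k| `^ v <= S.
    rewrite /S (bigD1 k) //= lerDl; apply: sumr_ge0 => i _; exact: powR_ge0.
  by rewrite leNgt H2.
have sq2 : forall a : R, 0 <= a -> a ^+ 2 = a `^ v * a `^ (2 - v).
  move=> a a0; rewrite -powRD; last by rewrite subrKC pnatr_eq0.
  by rewrite subrKC -[2]/(2%:R) powR_mulrn.
have -> : ((S `^ v^-1) ^+ 2) = S * N `^ (2 - v) by rewrite -/N sq2 ?NvS // ltW.
rewrite mulr_suml; apply: ler_sum => k _.
rewrite -(real_normK (num_real (F k))) sq2 //; apply: ler_wpM2l; first exact: powR_ge0.
apply: ge0_ler_powR; [by rewrite subr_ge0 | by rewrite nnegrE | by rewrite nnegrE ltW | exact: FN].
Qed.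

End PowLemmas.

Section Concrete.
Variable R : realType.
Variables d m p n : nat.
Variable g : 'I_m -> 'I_p -> 'rV[R]_d -> R.
Variable X : 'M[R]_(n, d).

Definition aij i j : 'M[R]_(n, m) := \matrix_(k, i') ((i' == i)%:R * g i j (row k X)).
Definition wij i j : R := Num.sqrt (fs (aij i j)).

Lemma PsiX_sum B : PsiX g B X = \sum_i \sum_j B i j *: aij i j.
Proof.
apply/matrixP => k i'; rewrite !mxE summxE (bigD1 i') //=.
rewrite [X in _ = _ + X]big1 ?addr0.
  rewrite summxE; apply: eq_bigr => j _; rewrite !mxE eqxx mul1r //.
move=> i /negbTE hi; rewrite summxE big1 // => j _.
by rewrite !mxE eq_sym hi mul0r mulr0.
Qed.

Lemma fs_aij i j : fs (aij i j) = \sum_k g i j (row k X) ^+ 2.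
Proof.
rewrite /fs; apply: eq_bigr => k _; rewrite (bigD1 i) //= big1 ?addr0.
  by rewrite mxE eqxx mul1r.
by move=> i' /negbTE hi; rewrite mxE hi mul0r expr0n.
Qed.

Lemma fs_eq0 (A : 'M[R]_(n, m)) : fs A = 0 -> A = 0.
Proof.
move=> h; apply/matrixP => k i; rewrite mxE.
have hk := @psumr_eq0P _ _ predT (fun k => \sum_(i < m) A k i ^+ 2)
  (fun k _ => sumr_ge0 _ (fun i _ => sqr_ge0 (A k i))) h k isT.
have := @psumr_eq0P _ _ predT (fun i => A k i ^+ 2) (fun i _ => sqr_ge0 _) hk i isT.
by move/eqP; rewrite sqrf_eq0 => /eqP.
Qed.

Lemma wij_ge0 i j : 0 <= wij i j.
Proof. exact: sqrtr_ge0. Qed.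

Lemma wij2 i j : wij i j ^+ 2 = fs (aij i j).
Proof. by rewrite /wij sqr_sqrtr // fs_ge0. Qed.

Lemma wij_le (v : R) i j : 0 < v -> v <= 2 ->
  wij i j <= (\sum_k `|g i j (row k X)| `^ v) `^ v^-1.
Proof.
move=> v0 v2; rewrite /wij fs_aij.
have N0 : 0 <= (\sum_k `|g i j (row k X)| `^ v) `^ v^-1 by exact: powR_ge0.
rewrite -[X in _ <= X](ger0_norm N0) -sqrtr_sqr ler_sqrt ?sqr_ge0 //.
exact: l2_le_lv.
Qed.

Lemma sum_w_le (v s c : R) : 0 < v -> v <= 2 -> 0 < s -> 0 < c ->
  G_norm v s g X <= c ->
  \sum_i \sum_j wij i j `^ s <= c `^ s.
Proof.
move=> v0 v2 s0 c0 hG.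
apply: (@le_trans _ _ (\sum_i \sum_j (\sum_k `|g i j (row k X)| `^ v) `^ (s / v))).
  apply: ler_sum => i _; apply: ler_sum => j _.
  rewrite mulrC powRrM; apply: ge0_ler_powR; rewrite ?nnegrE ?powR_ge0 ?wij_ge0 //.
    exact: ltW.
  exact: wij_le.
apply: pow_inv_le => //; last exact: ltW.
by apply: sumr_ge0 => i _; apply: sumr_ge0 => j _; exact: powR_ge0.
Qed.

Definition Sv := (bool * 'I_m * 'I_p)%type.
Definition sgnb (b : bool) : R := if b then 1 else -1.
Definition vtx (T : R) (x : Sv) : 'M[R]_(n, m) :=
  (sgnb x.1.1 * (T / wij x.1.2 x.2)) *: aij x.1.2 x.2.

Lemma fs_vtx T x : fs (vtx T x) <= T ^+ 2.
Proof.
rewrite /vtx fsZ -wij2 exprMn.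
have -> : sgnb x.1.1 ^+ 2 = 1 by case: x => [[[] i] j]; rewrite /sgnb ?expr1n ?sqrrN ?expr1n.
rewrite mul1r; have [->|w0] := eqVneq (wij x.1.2 x.2) 0.
  by rewrite expr0n mulr0 sqr_ge0.
by rewrite exprMn exprVn mulfVK ?expf_neq0.
Qed.

Lemma sumS (V : zmodType) (F : Sv -> V) :
  \sum_(x : Sv) F x = \sum_(b : bool) \sum_i \sum_j F (b, i, j).
Proof.
rewrite (pair_bigA _ (fun b i => \sum_j F (b, i, j))) /=.
transitivity (\sum_(q : bool * 'I_m) \sum_j F (q, j)); last first.
  by apply: eq_bigr => -[b i] _.
rewrite (pair_bigA _ (fun q j => F (q, j))) /=.
by apply: eq_bigr => -[[b i] j].
Qed.

End Concrete.

Section Dec.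
Variable R : realType.
Variables d m p n : nat.
Variable g : 'I_m -> 'I_p -> 'rV[R]_d -> R.
Variable X : 'M[R]_(n, d).

Lemma indic_sum (i0 : 'I_m) (j0 : 'I_p) (K : R) :
  \sum_i \sum_j ((i == i0) && (j == j0))%:R * K = K.
Proof.
rewrite (bigD1 i0) //= [X in _ + X]big1 ?addr0.
  rewrite (bigD1 j0) //= !eqxx mul1r [X in _ + X]big1 ?addr0 //.
  by move=> j /negbTE ->; rewrite andbF mul0r.
by move=> i /negbTE hi; apply: big1 => j _; rewrite hi mul0r.
Qed.

Lemma decomp (v r s b c : R) (i0 : 'I_m) (j0 : 'I_p) (B : 'M[R]_(m, p)) :
  0 < v -> v <= 2 -> 0 < r -> 0 < s -> r^-1 + s^-1 = 1 -> 0 < b -> 0 < c ->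
  G_norm v s g X <= c -> entry_rnorm r B <= b ->
  exists lam : Sv m p -> R, (forall x, 0 <= lam x) /\ \sum_x lam x = 1 /\
    \sum_x lam x *: vtx g X (b * c) x = PsiX g B X.
Proof.
move=> v0 v2 r0 s0 rs b0 c0 hG hB.
set T := b * c.
have T0 : 0 < T by rewrite mulr_gt0.
have hBr : \sum_i \sum_j `|B i j| `^ r <= b `^ r.
  apply: pow_inv_le => //; last exact: ltW.
  by apply: sumr_ge0 => i _; apply: sumr_ge0 => j _; exact: powR_ge0.
have hW := sum_w_le v0 v2 s0 c0 hG.
have hL : \sum_i \sum_j `|B i j| * wij g X i j <= T.
  apply: (holder_lite r0 s0 rs b0 c0) => //.
  by move=> i j; exact: wij_ge0.
set L := \sum_i \sum_j (`|B i j| * wij g X i j / T).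
have LE : L = (\sum_i \sum_j `|B i j| * wij g X i j) / T.
  by rewrite /L mulr_suml; apply: eq_bigr => i _; rewrite mulr_suml.
have L1 : L <= 1 by rewrite LE ler_pdivrMr // mul1r.
pose lam (x : Sv m p) := (x.1.1 == (0 <= B x.1.2 x.2))%:R *
   (`|B x.1.2 x.2| * wij g X x.1.2 x.2 / T) +
   ((x.1.2 == i0) && (x.2 == j0))%:R * ((1 - L) / 2).
exists lam; split; [|split].
- move=> x; apply: addr_ge0; apply: mulr_ge0 => //.
    by rewrite divr_ge0 ?mulr_ge0 ?wij_ge0 // ltW.
  by rewrite divr_ge0 // subr_ge0.
- rewrite sumS exchange_big; under eq_bigr do rewrite exchange_big.
  transitivity (\sum_i \sum_j (`|B i j| * wij g X i j / T +
      ((i == i0) && (j == j0))%:R * (1 - L))).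
    apply: eq_bigr => i _; apply: eq_bigr => j _; rewrite big_bool /lam /=.
    case: (0 <= B i j) => /=; rewrite mul1r mul0r add0r; [rewrite -addrA | rewrite addrCA];
    by rewrite -mulrDr -splitr.
  under eq_bigr do rewrite big_split.
  by rewrite big_split /= indic_sum -/L addrC subrK.
- rewrite PsiX_sum sumS exchange_big; under eq_bigr do rewrite exchange_big.
  apply: eq_bigr => i _; apply: eq_bigr => j _.
  rewrite big_bool /vtx /= !scalerA -scalerDl.
  have [w0|wn0] := eqVneq (wij g X i j) 0.
    have -> : aij g X i j = 0 by apply: fs_eq0; rewrite -wij2 w0 expr0n.
    by rewrite !scaler0.
  congr (_ *: _); rewrite /lam /sgnb /=.
  have Tn0 : T != 0 by rewrite gt_eqF.
  case: (boolP (0 <= B i j)) => hb /=.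
    by rewrite ger0_norm //; field; apply/andP.
  have Bn : B i j < 0 by rewrite ltNge.
  by rewrite ltr0_norm //; field; apply/andP.
Qed.

End Dec.

Lemma fs_D (R : realType) (n m : nat) (S : finType) (V : S -> 'M[R]_(n, m))
  (lam : S -> R) (x : 'M[R]_(n, m)) :
  \sum_s lam s = 1 -> \sum_s lam s *: V s = x ->
  \sum_s lam s * fs (x - V s) = \sum_s lam s * fs (V s) - fs x.
Proof.
move=> H1 Hx.
have H0 : \sum_s lam s *: (V s - x) = 0.
  under eq_bigr do rewrite scalerBr.
  by rewrite sumrB -scaler_suml H1 scale1r Hx subrr.
have := fs_avg x H1 H0.
have -> : \sum_s lam s * fs (x + (V s - x)) = \sum_s lam s * fs (V s).
  by apply: eq_bigr => s _; rewrite addrC subrK.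
move=> ->; rewrite addrAC subrr add0r; apply: eq_bigr => s _.
by rewrite -fsN opprB.
Qed.

Lemma PsiX_lin (R : realType) (d m p n : nat) (g : 'I_m -> 'I_p -> 'rV[R]_d -> R)
  (X : 'M[R]_(n, d)) (B1 B2 : 'M[R]_(m, p)) (t : R) :
  PsiX g B2 X + t *: (PsiX g B1 X - PsiX g B2 X) = PsiX g (B2 + t *: (B1 - B2)) X.
Proof.
apply/matrixP => k i; rewrite !mxE -sumrB mulr_sumr -big_split /=.
by apply: eq_bigr => j _; rewrite !mxE; ring.
Qed.

Lemma PsiX0 (R : realType) (d m p n : nat) (g : 'I_m -> 'I_p -> 'rV[R]_d -> R)
  (X : 'M[R]_(n, d)) : PsiX g 0 X = 0.
Proof. by apply/matrixP => k i; rewrite !mxE big1 // => j _; rewrite mxE mul0r. Qed.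

Lemma rnorm0 (R : realType) (m p : nat) (r : R) : 0 < r ->
  entry_rnorm r (0 : 'M[R]_(m, p)) = 0.
Proof.
move=> r0; rewrite /entry_rnorm big1 ?powR0 ?invr_eq0 ?gt_eqF //.
by move=> i _; rewrite big1 // => j _; rewrite mxE normr0 powR0 // gt_eqF.
Qed.

Lemma rnorm_conv (R : realType) (m p : nat) (r b t : R) (B1 B2 : 'M[R]_(m, p)) :
  1 <= r -> 0 < b -> 0 <= t -> t <= 1 ->
  entry_rnorm r B1 <= b -> entry_rnorm r B2 <= b ->
  entry_rnorm r (B2 + t *: (B1 - B2)) <= b.
Proof.
move=> r1 b0 t0 t1 h1 h2.
have r0 : 0 < r by apply: lt_le_trans r1.
have s0 : forall B : 'M[R]_(m, p), 0 <= \sum_i \sum_j `|B i j| `^ r.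
  by move=> B; apply: sumr_ge0 => i _; apply: sumr_ge0 => j _; exact: powR_ge0.
have h1' := pow_inv_le (s0 B1) r0 (ltW b0) h1.
have h2' := pow_inv_le (s0 B2) r0 (ltW b0) h2.
rewrite /entry_rnorm; apply: le_pow_inv => //; first exact: ltW.
apply: (@le_trans _ _ (t * \sum_i \sum_j `|B1 i j| `^ r +
                      (1 - t) * \sum_i \sum_j `|B2 i j| `^ r)); last first.
  have -> : b `^ r = t * b `^ r + (1 - t) * b `^ r by ring.
  by apply: lerD; apply: ler_wpM2l => //; rewrite subr_ge0.
rewrite !mulr_sumr -big_split; apply: ler_sum => i _.
rewrite !mulr_sumr -big_split; apply: ler_sum => j _ /=.
have e : (B2 + t *: (B1 - B2)) i j = t * B1 i j + (1 - t) * B2 i j.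
  by rewrite !mxE; ring.
rewrite e; apply: le_trans (powR_conv r1 (normr_ge0 _) (normr_ge0 _) t0 t1).
apply: ge0_ler_powR; [exact: ltW | by rewrite nnegrE |
   by rewrite nnegrE addr_ge0 // mulr_ge0 // subr_ge0 |].
apply: le_trans (ler_normD _ _) _.
have t1' : 0 <= 1 - t by rewrite subr_ge0.
by rewrite !normrM (ger0_norm t0) (ger0_norm t1').
Qed.

Unset Implicit Arguments. Set Strict Implicit.

Theorem proposition2 (R : realType) (d m p n : nat)
  (hd : (0 < d)%N) (hm : (0 < m)%N) (hp : (0 < p)%N) (hn : (0 < n)%N)
  (g : 'I_m -> 'I_p -> 'rV[R]_d -> R) (X : 'M[R]_(n, d))
  (v r s b c : R)
  (hv0 : 0 < v) (hv2 : v <= 2) (hr : 0 < r) (hs : 0 < s)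
  (hrs : r^-1 + s^-1 = 1) (hb : 0 < b) (hc : 0 < c)
  (hG : G_norm v s g X <= c)
  (eps : R) (heps : 0 < eps) :
  let U := [set A : 'M[R]_(n, m) |
              exists B : 'M[R]_(m, p), entry_rnorm r B <= b /\ A = PsiX g B X] in
  exists N : nat, is_covering_number U eps N /\
    ln (N%:R : R) <= b ^+ 2 * c ^+ 2 / eps ^+ 2 * ln ((2 * m * p)%:R : R).
Proof.
move=> U.
have r1 : 1 <= r.
  have : r^-1 < 1 by rewrite -hrs ltrDl invr_gt0.
  by rewrite invf_lt1 // => /ltW.
set T := b * c.
have T0 : 0 < T by rewrite mulr_gt0.
pose i0 : 'I_m := Ordinal hm.
pose j0 : 'I_p := Ordinal hp.
pose s0 : Sv m p := (true, i0, j0).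
have hdec : forall u, U u -> exists lam : Sv m p -> R,
    (forall x, 0 <= lam x) /\ \sum_x lam x = 1 /\
    \sum_x lam x *: vtx g X T x = u.
  move=> u [B [hB ->]].
  exact: (decomp i0 j0 hv0 hv2 hr hs hrs hb hc hG hB).
have hU : forall u, U u -> fs u <= T ^+ 2.
  move=> u /hdec [lam [hl0 [hl1 hlx]]].
  have hD := fs_D hl1 hlx.
  have D0 : 0 <= \sum_x lam x * fs (u - vtx g X T x).
    by apply: sumr_ge0 => x _; rewrite mulr_ge0 // fs_ge0.
  have : \sum_x lam x * fs (vtx g X T x) <= T ^+ 2.
    rewrite -[X in _ <= X]mul1r -hl1 mulr_suml; apply: ler_sum => x _.
    by rewrite ler_wpM2l // fs_vtx.
  lra.
have U0 : U 0 by exists 0; rewrite rnorm0 // PsiX0; split => //; exact: ltW.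
have hconv : forall x y (t : R), U x -> U y -> 0 <= t -> t <= 1 ->
    U (y + t *: (x - y)).
  move=> x y t [B1 [h1 ->]] [B2 [h2 ->]] t0 t1.
  exists (B2 + t *: (B1 - B2)); split; first exact: rnorm_conv.
  exact: PsiX_lin.
set t2 := T ^+ 2 / eps ^+ 2.
have t20 : 0 <= t2 by rewrite divr_ge0 // sqr_ge0.
set K := Num.trunc t2.
have /andP [hK1 hK2] := truncn_itv t20.
rewrite -/K in hK1 hK2.
set bnd := (maxn 1 K)%:R * T ^+ 2 / (K.+1%:R) ^+ 2.
have e2 : 0 < eps ^+ 2 by rewrite exprn_gt0.
have hT2 : T ^+ 2 < K.+1%:R * eps ^+ 2 by rewrite -ltr_pdivrMr.
have Kp : 0 < K.+1%:R :> R by rewrite ltr0n.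
have bnd_lt : bnd < eps ^+ 2.
  rewrite /bnd ltr_pdivrMr ?exprn_gt0 //.
  have hmx : (maxn 1 K)%:R <= K.+1%:R :> R by rewrite ler_nat geq_max ltnS leq0n /=.
  apply: (@le_lt_trans _ _ (K.+1%:R * T ^+ 2)).
    by rewrite ler_wpM2r // sqr_ge0.
  rewrite expr2; nra.
set eta := eps ^+ 2 - bnd.
have eta0 : 0 < eta by rewrite subr_gt0.
have hpr : forall cc : 'M[R]_(n, m), exists q, U q /\
    forall x, U x -> fs (x - cc) <= eps ^+ 2 - eta -> fs (x - q) <= eps ^+ 2.
  move=> cc; exact: (proj_exists (eps ^+ 2) cc U0 hU hconv eta0).
case: (boolp.choice hpr) => pr Hpr.
pose cen (f : {ffun 'I_K -> Sv m p}) : 'M[R]_(n, m) :=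
  (K.+1%:R)^-1 *: \sum_(l < K) vtx g X T (f l).
pose V0 := undup [seq pr (cen f) | f <- enum {ffun 'I_K -> Sv m p}].
have hcov : is_proper_cover U eps V0.
  split; first exact: undup_uniq.
  split.
    by move=> w; rewrite mem_undup => /mapP [f _ ->]; exact: (Hpr _).1.
  move=> u Uu.
  have [lam [hl0 [hl1 hlx]]] := hdec u Uu.
  have [sq [hsz hsq]] := greedy hl0 hl1 hlx K.
  pose f : {ffun 'I_K -> Sv m p} := [ffun l : 'I_K => nth s0 sq l].
  exists (pr (cen f)).
    by rewrite mem_undup; apply/mapP; exists f => //; rewrite mem_enum.
  have hsum : \sum_(l < K) vtx g X T (f l) = \sum_(s <- sq) vtx g X T s.
    by rewrite (big_nth s0) hsz big_mkord; apply: eq_bigr => l _; rewrite ffunE.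
  have hfs : fs (u - cen f) <= eps ^+ 2 - eta.
    have -> : eps ^+ 2 - eta = bnd by rewrite /eta opprB addrC subrK.
    have -> : u - cen f = (K.+1%:R)^-1 *: (K.+1%:R *: u - \sum_(s <- sq) vtx g X T s).
      by rewrite /cen hsum scalerBr scalerA mulVf ?scale1r // gt_eqF.
    rewrite fsZ.
    have hD := fs_D hl1 hlx.
    have hVs : \sum_x lam x * fs (vtx g X T x) <= T ^+ 2.
      rewrite -[X in _ <= X]mul1r -hl1 mulr_suml; apply: ler_sum => x _.
      by rewrite ler_wpM2l // fs_vtx.
    have hu := hU u Uu.
    have hu0 := fs_ge0 u.
    have hmain : fs (K.+1%:R *: u - \sum_(s <- sq) vtx g X T s) <= (maxn 1 K)%:R * T ^+ 2.
      apply: (le_trans hsq); rewrite hD.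
      case: K hK1 {hK2 bnd bnd_lt eta eta0 hpr Hpr cen V0 f hsum hsq hsz Kp hT2} => [|k] _.
        by rewrite mul0r addr0 /= mul1r.
      rewrite /maxn /=.
      have hk : 0 <= k%:R :> R by [].
      rewrite -/(maxn 1 k.+1) (maxn_idPr (ltn0Sn k)).
      rewrite -natr1.
      nra.
    rewrite /bnd exprVn mulrC; apply: ler_wpM2r => //.
  have := (Hpr (cen f)).2 u Uu hfs => h.
  change (Num.sqrt (fs (u - pr (cen f))) <= eps).
  by rewrite -(ger0_norm (ltW heps)) -sqrtr_sqr ler_sqrt // sqr_ge0.
pose P := fun N => `[< exists V, is_proper_cover U eps V /\ size V = N >].
have exP : exists N, P N by exists (size V0); apply/asboolP; exists V0.
case: (ex_minnP exP) => N /asboolP HN Hmin.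
exists N; split.
  by split => // V hV; apply: Hmin; apply/asboolP; exists V.
have [V1 [hV hVs]] := HN.
have N1 : (0 < N)%N.
  have [w hw _] := hV.2.2 0 U0.
  by rewrite -hVs; case: (V1) hw.
have NV0 : (N <= size V0)%N by apply: Hmin; apply/asboolP; exists V0.
have V0s : (size V0 <= (2 * m * p) ^ K)%N.
  apply: leq_trans (size_undup _) _.
  by rewrite size_map -cardE card_ffun card_ord /Sv !card_prod card_bool !card_ord.
have Mpos : (0 < 2 * m * p)%N by rewrite !muln_gt0 hm hp.
have lnM : 0 <= ln ((2 * m * p)%:R : R) by apply: ln_ge0; rewrite ler1n.
apply: (@le_trans _ _ (ln (((2 * m * p) ^ K)%:R : R))).
  rewrite ler_ln ?posrE ?ltr0n ?expn_gt0 ?Mpos // ler_nat.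
  exact: leq_trans NV0 V0s.
have hlnK : ln (((2 * m * p) ^ K)%:R : R) = K%:R * ln ((2 * m * p)%:R : R).
  by rewrite natrX lnXn ?ltr0n // mulr_natl.
rewrite hlnK.
have -> : b ^+ 2 * c ^+ 2 / eps ^+ 2 = t2 by rewrite /t2 /T exprMn.
by apply: ler_wpM2r.
Qed.
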